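(* Let $k\ge2$, $\Sigma_k=\{0,1,\dots,k-1\}$, and let $(f(n))_{n\ge0}$ be a $k$-regular sequence. Let $T=(Q,\Sigma_k,\Sigma_k,\delta,q_0,F,\rho)$ be a functional finite-state transducer with transitions on single letters only but arbitrary words as outputs on each transition, where $Q=\{q_0,\dots,q_{r-1}\}$, $\delta:Q\times\Sigma_k\to Q$ is the transition function, $\rho:Q\times\Sigma_k\to\Sigma_k^*$ is the output function, and $F\subseteq Q$ is the set of final states; $\delta$ and $\rho$ are extended to $\Sigma_k^*$ in the obvious way, and for an input word $x$ the output $T(x)=\rho(q_0,x)$ is defined when $\delta(q_0,x)\in F$. Define $g(n)=f(T((n)_k))$, where $(n)_k$ is the canonical base-$k$ representation of $n$ and $f$ applied to a word over $\Sigma_k$ means $f$ evaluated at the integer that word represents in base $k$ (most significant digit first), assuming $T((n)_k)$ is defined for every $n$. Then $(g(n))_{n\ge0}$ is also a $k$-regular sequence.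
   Context: A sequence $(a_n)_{n\ge0}$ is $k$-regular if there is a finite subset $S$ of its $k$-kernel $\{(a_{k^en+i})_{n\ge0}: e\ge0, 0\le i<k^e\}$ such that every element of the $k$-kernel is a linear combination of elements of $S$; equivalently, there exist a row vector $v$, a matrix-valued morphism $\mu$ on $\Sigma_k^*$ and a column vector $w$ with $a_n=v\mu((n)_k)w$ for all $n$ (a linear representation, also satisfying $a_n=v\mu(x)w$ for any base-$k$ representation $x$ of $n$ with leading zeros). A transducer is functional if every input yields at most one output. *)

(* Defs.v *)
From mathcomp Require Import all_boot all_order all_algebra.
Set Implicit Arguments. Unset Strict Implicit. Unset Printing Implicit Defensive.
Import GRing.Theory.
Local Open Scope ring_scope.

Definition k_regular (R : fieldType) (k : nat) (f : nat -> R) : Prop :=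
  exists S : seq (nat * nat),
    all (fun p => p.2 < k ^ p.1)%N S /\
    forall e i : nat, (i < k ^ e)%N ->
      exists c : nat -> R, forall n : nat,
        f (k ^ e * n + i)%N =
        \sum_(j < size S) c j * f (k ^ (nth (0, 0) S j).1 * n + (nth (0, 0) S j).2)%N.

(* least-significant-digit-first base-k digits of n (fuel-based; fuel n
   suffices for k >= 2); (0)_k is the empty word. *)
Fixpoint lsd_digits (k fuel n : nat) : seq nat :=
  match fuel with
  | 0 => [::]
  | fuel'.+1 => if n == 0%N then [::] else (n %% k)%N :: lsd_digits k fuel' (n %/ k)%N
  end.

Definition base_repr (k n : nat) : seq 'I_k :=
  pmap (fun d : nat => (insub d : option 'I_k)) (rev (lsd_digits k n n)).

Definition word_val (k : nat) (w : seq 'I_k) : nat :=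
  foldl (fun acc (d : 'I_k) => acc * k + d)%N 0%N w.

Definition ext_delta (Q : finType) (k : nat) (delta : Q -> 'I_k -> Q)
  (q : Q) (w : seq 'I_k) : Q := foldl delta q w.

Fixpoint ext_rho (Q : finType) (k : nat) (delta : Q -> 'I_k -> Q)
  (rho : Q -> 'I_k -> seq 'I_k) (q : Q) (w : seq 'I_k) : seq 'I_k :=
  match w with
  | [::] => [::]
  | a :: w' => rho q a ++ ext_rho delta rho (delta q a) w'
  end.

(* Main.v *)
Require Import Defs.
From mathcomp Require Import all_boot all_order all_algebra.
From mathcomp Require Import zify.
From Stdlib Require Import Classical ClassicalEpsilon.
Set Implicit Arguments. Unset Strict Implicit. Unset Printing Implicit Defensive.
Import GRing.Theory.
Local Open Scope ring_scope.

Section Words.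
Variable k : nat.
Hypothesis hk : (2 <= k)%N.

Lemma lsd_fuel f1 f2 n : (n <= f1)%N -> (n <= f2)%N -> lsd_digits k f1 n = lsd_digits k f2 n.
Proof.
elim: f1 f2 n => [|f1 IH] [|f2] n /=.
- by [].
- by rewrite leqn0 => /eqP ->.
- by move=> _; rewrite leqn0 => /eqP ->.
case: eqP => // /eqP n0 h1 h2; congr (_ :: _); apply: IH.
- have : (0 < n)%N by lia.
  move=> /(ltn_Pdiv hk); lia.
- have : (0 < n)%N by lia.
  move=> /(ltn_Pdiv hk); lia.
Qed.

Lemma base_step m (a : 'I_k) : (0 < k * m + a)%N ->
  base_repr k (k * m + a) = base_repr k m ++ [:: a].
Proof.
move=> hpos; rewrite /base_repr.
set n := (k * m + a)%N.
have hn : n = n.-1.+1 by lia.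
have ha : (a < k)%N := ltn_ord a.
have hdiv : (n %/ k = m)%N by rewrite /n mulnC divnMDl ?divn_small ?addn0 //; lia.
have hmod : (n %% k = a)%N by rewrite /n mulnC modnMDl modn_small.
rewrite {1}hn /= ifF; last by apply/negbTE; lia.
rewrite hdiv hmod (@lsd_fuel n.-1 m m) //; last first.
  rewrite /n; nia.
rewrite rev_cons -cats1 pmap_cat /= insubT //=.
by congr (_ ++ [:: _]); apply: val_inj.
Qed.

Lemma base_ext e i : (i < k ^ e)%N -> exists w : seq 'I_k,
  forall n, (0 < n)%N -> base_repr k (k ^ e * n + i) = base_repr k n ++ w.
Proof.
elim: e i => [|e IH] i hi.
  exists [::] => n _; move: hi; rewrite ltnS leqn0 => /eqP ->.
  by rewrite expn0 mul1n addn0 cats0.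
have k0 : (0 < k)%N by lia.
have hi' : (i %/ k < k ^ e)%N by rewrite ltn_divLR // -expnSr.
have [w hw] := IH _ hi'.
exists (w ++ [:: Ordinal (ltn_pmod i k0)]) => n hn.
have -> : (k ^ e.+1 * n + i = k * (k ^ e * n + i %/ k) + i %% k)%N.
  rewrite {1}(divn_eq i k) expnS; set p := (k ^ e)%N; set q := (i %/ k)%N; nia.
have hp : (0 < k ^ e)%N by rewrite expn_gt0 k0.
rewrite (@base_step _ (Ordinal (ltn_pmod i k0))) /=; last by nia.
by rewrite hw // catA.
Qed.

Definition wv (w : seq 'I_k) := word_val w.

Lemma foldl_val acc (y : seq 'I_k) :
  foldl (fun acc (d : 'I_k) => acc * k + d)%N acc y =
  (acc * k ^ size y + foldl (fun acc (d : 'I_k) => acc * k + d)%N 0%N y)%N.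
Proof.
elim: y acc => [|a y IH] acc /=; first by rewrite muln1 addn0.
rewrite IH (IH (0 * k + a)%N) expnS; nia.
Qed.

Lemma word_val_cat (x y : seq 'I_k) :
  word_val (x ++ y) = (k ^ size y * word_val x + word_val y)%N.
Proof. by rewrite /word_val foldl_cat foldl_val mulnC. Qed.

Lemma foldl_lt acc (y : seq 'I_k) :
  (foldl (fun acc (d : 'I_k) => acc * k + d)%N acc y < acc.+1 * k ^ size y)%N.
Proof.
elim: y acc => [|a y IH] acc /=; first by rewrite muln1.
apply: (leq_trans (IH _)); rewrite expnS mulnA leq_mul2r; apply/orP; right.
have := ltn_ord a; nia.
Qed.

Lemma word_val_lt (y : seq 'I_k) : (word_val y < k ^ size y)%N.
Proof. by have := foldl_lt 0 y; rewrite mul1n. Qed.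

End Words.

Lemma ext_rho_cat (Q : finType) k (delta : Q -> 'I_k -> Q) rho q x y :
  ext_rho delta rho q (x ++ y) =
  ext_rho delta rho q x ++ ext_rho delta rho (ext_delta delta q x) y.
Proof.
elim: x q => [|a x IH] q //=.
by rewrite IH catA.
Qed.
Section Gen.
Variables (R : fieldType) (I : finType) (B : I -> nat -> R)
  (valid : nat -> nat -> bool) (K : nat -> nat -> nat -> R).
Hypothesis hK : forall e i, valid e i ->
  exists c : I -> R, forall n, K e i n = \sum_t c t * B t n.

Let N := #|I|.

Lemma cf_ex e i : exists c : I -> R, valid e i -> forall n, K e i n = \sum_t c t * B t n.
Proof.
case: (boolP (valid e i)) => h.
  by have [c hc] := hK h; exists c.
by exists (fun _ => 0).
Qed.

Definition cf e i := proj1_sig (constructive_indefinite_description _ (cf_ex e i)).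
Lemma cfP e i : valid e i -> forall n, K e i n = \sum_t cf e i t * B t n.
Proof. exact: (proj2_sig (constructive_indefinite_description _ (cf_ex e i))). Qed.

Definition vr e i : 'rV[R]_N := \row_j cf e i (enum_val j).

Lemma sum_ev (T: finType) (F : T -> R) : \sum_t F t = \sum_(j < #|T|) F (enum_val j).
Proof. rewrite -(big_enum_val (A := T)); apply: eq_bigl => t; by rewrite inE. Qed.

Lemma vrP e i : valid e i -> forall n, K e i n = \sum_j vr e i 0 j * B (enum_val j) n.
Proof.
move=> h n; rewrite cfP // sum_ev.
by apply: eq_bigr => j _; rewrite mxE.
Qed.

Definition spanS (S : seq (nat * nat)) : 'M[R]_N :=
  foldr (fun p A => (vr p.1 p.2 + A)%MS) 0 S.

Lemma coefs S (u : 'rV[R]_N) : (u <= spanS S)%MS ->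
  exists c : nat -> R, u = \sum_(j < size S) c j *: vr (nth (0,0)%N S j).1 (nth (0,0)%N S j).2.
Proof.
elim: S u => [|p S IH] u /=.
  rewrite submx0 => /eqP ->; exists (fun _ => 0); by rewrite big_ord0.
move/sub_addsmxP => [[a b] /= ->].
have [c hc] := IH (b *m spanS S) (submxMl _ _).
exists (fun j => if j is j'.+1 then c j' else a 0 0).
rewrite big_ord_recl /= hc; congr (_ + _).
by rewrite {1}(mx11_scalar a) mul_scalar_mx.
Qed.

Lemma step S : (forall e i, valid e i -> (vr e i <= spanS S)%MS) \/
  exists p : nat * nat, valid p.1 p.2 /\ (\rank (spanS S) < \rank (spanS (p :: S)))%N.
Proof.
case: (classic (forall e i, valid e i -> (vr e i <= spanS S)%MS)) => [h|h]; first by left.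
right; apply: NNPP => h2; apply: h => e i hv; apply: NNPP => hs; apply: h2.
exists (e, i); split => //=.
have := mxrank_leqif_sup (addsmxSr (vr e i) (spanS S)).
move=> [le eqc]; rewrite ltn_neqAle le andbT eqc.
by apply/negP; rewrite addsmx_sub => /andP [h' _]; exact: hs h'.
Qed.

Lemma maxS b S : all (fun p => valid p.1 p.2) S -> (N - \rank (spanS S) <= b)%N ->
  exists S', all (fun p => valid p.1 p.2) S' /\
    forall e i, valid e i -> (vr e i <= spanS S')%MS.
Proof.
elim: b S => [|b IH] S hS hb; case: (step S) => [h|[p [hp hr]]]; try by exists S.
  have := rank_leq_col (spanS (p :: S)); rewrite -/N.
  move=> h3; rewrite -/N in hb; lia.
apply: (IH (p :: S)); first by rewrite /= hp hS.
have := rank_leq_col (spanS (p :: S)); rewrite -/N => h3.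
rewrite -/N in hb; lia.
Qed.

Lemma fin_kernel : exists S : seq (nat * nat), all (fun p => valid p.1 p.2) S /\
  forall e i, valid e i -> exists c : nat -> R, forall n,
   K e i n = \sum_(j < size S) c j * K (nth (0,0)%N S j).1 (nth (0,0)%N S j).2 n.
Proof.
have [S [hS hsub]] := @maxS N [::] isT (leq_subr _ _).
exists S; split => // e i hv.
have [c hc] := coefs (hsub e i hv).
exists c => n; rewrite vrP // hc.
under eq_bigr => j _ do rewrite summxE big_distrl /=.
rewrite exchange_big /=; apply: eq_bigr => j _.
have hj : valid (nth (0,0)%N S j).1 (nth (0,0)%N S j).2.
  by apply: (allP hS); apply: mem_nth.
rewrite (vrP hj) big_distrr /=; apply: eq_bigr => l _.
by rewrite mxE mulrA.
Qed.
End Gen.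

Lemma sum_opt (R: nmodType) (T: finType) (F : option T -> R) : \sum_t F t = F None + \sum_p F (Some p).
Proof.
rewrite (bigD1 None) //=; congr (_ + _).
rewrite (reindex_omap Some (fun i => i)) //=; last by case.
by apply: eq_bigl => p; rewrite eqxx.
Qed.

Theorem lemma1 (R : fieldType) (k : nat) (hk : (2 <= k)%N) (f : nat -> R)
  (hf : k_regular k f)
  (Q : finType) (delta : Q -> 'I_k -> Q) (rho : Q -> 'I_k -> seq 'I_k)
  (q0 : Q) (F : {set Q})
  (hdef : forall n : nat, ext_delta delta q0 (base_repr k n) \in F) :
  k_regular k (fun n : nat => f (word_val (ext_rho delta rho q0 (base_repr k n)))).
Proof.
have k0 : (0 < k)%N by lia.
case: hf => [Sf [hSf hker]].
set d := size Sf.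
pose Fl (l : nat) m := f (k ^ (nth (0,0)%N Sf l).1 * m + (nth (0,0)%N Sf l).2)%N.
have cw_ex : forall y : seq 'I_k, exists c : nat -> R, forall m,
    f (k ^ size y * m + word_val y)%N = \sum_(j < d) c j * Fl j m.
  by move=> y; apply: hker; apply: word_val_lt.
pose cw y := proj1_sig (constructive_indefinite_description _ (cw_ex y)).
have cwP : forall y m, f (k ^ size y * m + word_val y)%N = \sum_(j < d) cw y j * Fl j m.
  by move=> y; exact: (proj2_sig (constructive_indefinite_description _ (cw_ex y))).
pose g n := f (word_val (ext_rho delta rho q0 (base_repr k n))).
pose Mv n := word_val (ext_rho delta rho q0 (base_repr k n)).
pose B (t : option (Q * 'I_d)) (n : nat) : R :=
  match t with
  | None => if n == 0%N then 1 else 0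
  | Some (q, l) => if (n != 0%N) && (ext_delta delta q0 (base_repr k n) == q)
                   then Fl l (Mv n) else 0
  end.
have := @fin_kernel R _ B (fun e i => (i < k ^ e)%N) (fun e i n => g (k ^ e * n + i)%N).
case.
  move=> e i hi.
  have [w hw] := base_ext hk hi.
  exists (fun t : option (Q * 'I_d) => match t with None => g i | Some (q, l) => cw (ext_rho delta rho q w) l end).
  move=> n; rewrite sum_opt /=.
  case: (posnP n) => [->|hn].
    rewrite mulr1 big1 ?addr0; first by rewrite muln0 add0n.
    by move=> [q l] _ /=; rewrite mulr0.
  have hn0 : (n == 0%N) = false by lia.
  rewrite mulr0 add0r.
  set qn := ext_delta delta q0 (base_repr k n).
  rewrite (eq_bigr (fun p : Q * 'I_d => if p.1 == qn then cw (ext_rho delta rho p.1 w) p.2 * Fl p.2 (Mv n) else 0)); last first.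
    by move=> [q l] _ /=; rewrite eq_sym; case: eqP => _; rewrite ?mulr0.
  rewrite -(pair_bigA _ (fun (q : Q) (l : 'I_d) => if q == qn then cw (ext_rho delta rho q w) l * Fl l (Mv n) else 0)) /=.
  rewrite (bigD1 qn) //= eqxx [X in _ + X]big1 ?addr0; last first.
    by move=> q hq; rewrite big1 // => l _; rewrite (negbTE hq).
  rewrite -cwP /g hw // ext_rho_cat word_val_cat //.
move=> S [hS hS2]; exists S; split => //.
Qed.
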